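(* Let $T\ge3$ and suppose the standing assumptions hold, each $f_t$ is nonnegative and $H$-smooth on $\mathcal{X}$, and each $f_t$ is $\lambda$-strongly convex for some $\lambda\in[1/T,1]$. Suppose $\mathcal{A}_{str}$ contains algorithms $A_1,A_2$ for which there is a constant $C_1>0$ such that for every $\lambda'>0$, $R(A_1,\lambda')\le \frac{C_1}{\lambda'}\ln(V_T+2)$ and $R(A_2,\lambda')\le \frac{C_1}{\lambda'}\ln(L_T^*+2)$ (as is the case for OEGD and S$^2$OGD). Then there is a constant $C$ depending only on $G,D,H,C_1$ and $|\mathcal{A}_{str}|+|\mathcal{A}_{exp}|+|\mathcal{A}_{con}|$ such that USC satisfies \[ \sum_{t=1}^T f_t(\mathbf{x}_t)-\min_{\mathbf{x}\in\mathcal{X}}\sum_{t=1}^T f_t(\mathbf{x})\le \frac{C}{\lambda}\Big(\min\{\ln(L_T^*+2),\ln(V_T+2)\}+\ln\ln T\Big). \]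
   Context: Setting (online convex optimization): $\mathcal{X}\subset\mathbb{R}^d$ is a nonempty closed convex set with $\max_{\mathbf{x},\mathbf{y}\in\mathcal{X}}\|\mathbf{x}-\mathbf{y}\|\le D$. For $t=1,\dots,T$, $f_t:\mathcal{X}\to\mathbb{R}$ are convex differentiable functions with $\max_{\mathbf{x}\in\mathcal{X}}\|\nabla f_t(\mathbf{x})\|\le G$. At round $t$ a learner outputs $\mathbf{x}_t\in\mathcal{X}$ depending only on $f_1,\dots,f_{t-1}$, then $f_t$ is revealed. An online algorithm (expert) is any such procedure. $f$ is $H$-smooth on $\mathcal{X}$ if $\|\nabla f(\mathbf{x})-\nabla f(\mathbf{y})\|\le H\|\mathbf{x}-\mathbf{y}\|$ for all $\mathbf{x},\mathbf{y}\in\mathcal{X}$. $L_T^*=\min_{\mathbf{x}\in\mathcal{X}}\sum_{t=1}^Tf_t(\mathbf{x})$, and $V_T=\sum_{t=1}^T\max_{\mathbf{x}\in\mathcal{X}}\|\nabla f_t(\mathbf{x})-\nabla f_{t-1}(\mathbf{x})\|^2$ with the convention $f_0\equiv0$. A function $f$ is $\lambda$-strongly convex on $\mathcal{X}$ if $f(\mathbf{y})\ge f(\mathbf{x})+\langle\nabla f(\mathbf{x}),\mathbf{y}-\mathbf{x}\rangle+\frac{\lambda}{2}\|\mathbf{y}-\mathbf{x}\|^2$ for all $\mathbf{x},\mathbf{y}\in\mathcal{X}$. Algorithm USC: Let $N=\lceil\log_2T\rceil$ and $\mathcal{P}_{str}=\mathcal{P}_{exp}=\{2^k/T: k=0,1,\dots,N\}$.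 Let $\mathcal{A}_{str},\mathcal{A}_{exp}$ be finite sets of online algorithms each taking a positive parameter, and $\mathcal{A}_{con}$ a finite set of online algorithms. The expert set $\mathcal{E}$ consists of the experts $E(A,\lambda')$ ($A$ run with parameter $\lambda'$) for $A\in\mathcal{A}_{str},\lambda'\in\mathcal{P}_{str}$; $E(A,\alpha')$ for $A\in\mathcal{A}_{exp},\alpha'\in\mathcal{P}_{exp}$; and $E(A)$ for $A\in\mathcal{A}_{con}$. Index them $E^1,\dots,E^{|\mathcal{E}|}$; every expert receives the full functions $f_1,f_2,\dots$ and outputs $\mathbf{x}_t^i\in\mathcal{X}$ at round $t$. Fix any $\bar{\mathbf{x}}\in\mathcal{X}$. USC outputs $\mathbf{x}_t=\sum_i p_t^i\mathbf{x}_t^i$ with weights given by Adapt-ML-Prod on the losses $\ell_t^i=\frac{\langle\nabla f_t(\mathbf{x}_t),\mathbf{x}_t^i-\bar{\mathbf{x}}\rangle+GD}{2GD}\in[0,1]$, $\ell_t=\sum_ip_t^i\ell_t^i$: namely $p_t^i=\eta_{t-1}^iw_{t-1}^i/\sum_j\eta_{t-1}^jw_{t-1}^j$, where $\eta_{t-1}^i=\min\{\frac12,\sqrt{\ln|\mathcal{E}|/(1+\sum_{s=1}^{t-1}(\ell_s-\ell_s^i)^2)}\}$ for $t\ge1$, $w_0^i=1/|\mathcal{E}|$, and $w_{t-1}^i=\big(w_{t-2}^i(1+\eta_{t-2}^i(\ell_{t-1}-\ell_{t-1}^i))\big)^{\eta_{t-1}^i/\eta_{t-2}^i}$ for $t\ge2$.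 For $A\in\mathcal{A}_{str}$ and $\lambda'>0$, $R(A,\lambda')$ denotes a regret bound of $A$: a number (possibly depending on $L_T^*,V_T$) such that whenever $f_1,\dots,f_T$ satisfy the setting (including nonnegativity and $H$-smoothness) and are all $\lambda'$-strongly convex, the outputs $\mathbf{y}_t$ of $A$ run with parameter $\lambda'$ satisfy $\sum_t f_t(\mathbf{y}_t)-\min_{\mathbf{x}\in\mathcal{X}}\sum_tf_t(\mathbf{x})\le R(A,\lambda')$. *)

(* Defs.v *)
From HB Require Import structures.
From mathcomp Require Import all_boot all_order all_algebra.
From mathcomp Require Import all_classical all_reals all_analysis.
From Stdlib Require List.
Set Implicit Arguments. Unset Strict Implicit. Unset Printing Implicit Defensive.
Import Order.TTheory GRing.Theory Num.Theory.
Import numFieldNormedType.Exports.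
Local Open Scope classical_set_scope.
Local Open Scope ring_scope.

Section OCO.
Variables (R : realType) (d : nat).
Notation vec := 'rV[R]_d.

Definition dot (u v : vec) : R := \sum_(i < d) u 0 i * v 0 i.
Definition enorm (u : vec) : R := Num.sqrt (dot u u).

Definition grad (f : vec -> R) (x : vec) : vec :=
  \row_(i < d) ('d f x (delta_mx 0 i : vec)).

(* An online algorithm (expert): the output at round t is a function of the
   previously revealed functions f_1, ..., f_{t-1}. *)
Definition alg := seq (vec -> R) -> vec.

Definition hist (fs : nat -> vec -> R) (t : nat) : seq (vec -> R) :=
  map fs (iota 1 t).

Definition convex_set (X : set vec) : Prop :=
  forall x y a, X x -> X y -> 0 <= a <= 1 -> X (a *: x + (1 - a) *: y).

Definition convex_on (X : set vec) (f : vec -> R) : Prop :=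
  forall x y a, X x -> X y -> 0 <= a <= 1 ->
    f (a *: x + (1 - a) *: y) <= a * f x + (1 - a) * f y.

Definition strongly_convex_on (X : set vec) (lam : R) (f : vec -> R) : Prop :=
  forall x y, X x -> X y ->
    f x + dot (grad f x) (y - x) + lam / 2 * enorm (y - x) ^+ 2 <= f y.

Definition smooth_on (X : set vec) (H : R) (f : vec -> R) : Prop :=
  forall x y, X x -> X y -> enorm (grad f x - grad f y) <= H * enorm (x - y).

Definition domain_ok (X : set vec) (D : R) : Prop :=
  [/\ exists x, X x, closed X, convex_set X &
      forall x y, X x -> X y -> enorm (x - y) <= D].

Definition setting (X : set vec) (G H : R) (T : nat) (fs : nat -> vec -> R)
  : Prop :=
  forall t, (1 <= t <= T)%N ->
    [/\ forall x, X x -> differentiable (fs t) x,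
        convex_on X (fs t),
        forall x, X x -> enorm (grad (fs t) x) <= G,
        forall x, X x -> 0 <= fs t x &
        smooth_on X H (fs t)].

Definition cumloss (T : nat) (fs : nat -> vec -> R) (x : vec) : R :=
  \sum_(1 <= t < T.+1) fs t x.

(* L_T^* = min_{x in X} sum_t f_t(x) (the minimum exists; written as inf) *)
Definition Lstar (X : set vec) (T : nat) (fs : nat -> vec -> R) : R :=
  inf [set cumloss T fs x | x in X].

(* V_T, with f_0 = 0 (so grad f_0 = 0) *)
Definition VT (X : set vec) (T : nat) (fs : nat -> vec -> R) : R :=
  \sum_(1 <= t < T.+1)
    sup [set enorm (grad (fs t) x -
                    (if t == 1%N then 0 else grad (fs t.-1) x)) ^+ 2 | x in X].

Definition regret (X : set vec) (T : nat) (fs : nat -> vec -> R)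
  (xs : nat -> vec) : R :=
  \sum_(1 <= t < T.+1) fs t (xs t) - Lstar X T fs.

Definition run (A : alg) (fs : nat -> vec -> R) (t : nat) : vec :=
  A (hist fs t.-1).

(* N = ceil(log2 T); P = {2^k / T : k = 0..N} *)
Definition grid (T : nat) : seq R :=
  [seq (2 ^ k)%:R / T%:R | k <- iota 0 (up_log 2 T).+1].

Definition experts (T : nat) (Astr Aexp : seq (R -> alg)) (Acon : seq alg)
  : seq alg :=
  [seq A l | A <- Astr, l <- grid T] ++ [seq A a | A <- Aexp, a <- grid T]
  ++ Acon.

Section USC.
Variables (G D : R) (xbar : vec) (es : seq alg) (fs : nat -> vec -> R).
Let K := size es.
Let e0 : alg := fun _ => 0.

Definition expert_out (i t : nat) : vec := run (nth e0 es i) fs t.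

(* eta^i computed from the cumulative sum S^i = sum_s (l_s - l_s^i)^2 *)
Definition eta_of (S : nat -> R) (i : nat) : R :=
  Num.min (2^-1) (Num.sqrt (ln K%:R / (1 + S i))).

Definition probs (w S : nat -> R) (i : nat) : R :=
  eta_of S i * w i / \sum_(j < K) eta_of S j * w j.

Definition combine (w S : nat -> R) (t : nat) : vec :=
  \sum_(i < K) probs w S i *: expert_out i t.

Definition loss_i (x : vec) (t i : nat) : R :=
  (dot (grad (fs t) x) (expert_out i t - xbar) + G * D) / (2 * G * D).

Fixpoint usc_state (t : nat) : (nat -> R) * (nat -> R) :=
  match t with
  | 0 => (fun _ => K%:R^-1, fun _ => 0)
  | t'.+1 =>
      let (w, S) := usc_state t' in
      let x := combine w S t in
      let l := loss_i x t in
      let lbar := \sum_(i < K) probs w S i * l i in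
      let S' := fun i => S i + (lbar - l i) ^+ 2 in
      (fun i => powR (w i * (1 + eta_of S i * (lbar - l i)))
                     (eta_of S' i / eta_of S i), S')
  end.

Definition usc (t : nat) : vec :=
  let (w, S) := usc_state t.-1 in combine w S t.

End USC.
End OCO.

(* Main.v *)
From Pilot Require Import Defs.
From HB Require Import structures.
From mathcomp Require Import all_boot all_order all_algebra.
From mathcomp Require Import all_classical all_reals all_analysis.
From mathcomp Require Import ring lra zify.
From Stdlib Require List.
Import Order.TTheory GRing.Theory Num.Theory.

Module P1M.
Import Pilot.Defs.
Set Implicit Arguments. Unset Strict Implicit.
Local Open Scope ring_scope.

Section RealLemmas.
Variable R : realType.

Lemma ln_le_sub1 {z : R} : 0 < z -> ln z <= z - 1.
Proof.
move=> z0; have := @le_ln1Dx R (z - 1); have -> : 1 + (z - 1) = z by ring. move=> h; apply: h; lra.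
Qed.

Lemma ln2_ge : (2^-1 : R) <= ln 2.
Proof.
have h1 := @expR_ge1Dx R (- 2^-1).
have h2 := @expRxMexpNx_1 R (2^-1).
have hp := @expR_gt0 R (2^-1).
have : expR (2^-1) <= 2 :> R.
  move: h1 h2 hp; set a := expR (2^-1); set b := expR (- 2^-1).
  have -> : (1 + - 2^-1 : R) = 2^-1 by field.
  move=> h1 h2 hp. have h3 : 0 <= a * (b - 2^-1) by apply: mulr_ge0; lra.
  have : a * (b - 2^-1) = 1 - a / 2 by rewrite mulrBr h2; field.
  lra.
rewrite -(ler_ln (expR_gt0 _)) ?posrE //= expRK.
by [].
Qed.

Lemma powR_bern (x a : R) : 0 < x -> 0 < a <= 1 -> x `^ a <= 1 + a * (x - 1).
Proof.
move=> x0 /andP[a0 a1].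
set y := 1 + a * (x - 1).
have y0 : 0 < y by rewrite /y; nra.
rewrite -(ler_ln (powR_gt0 _ x0) y0) ln_powR.
have h1 := ln_le_sub1 (divr_gt0 x0 y0).
have yi : 0 < y^-1 by rewrite invr_gt0.
have h2 := ln_le_sub1 yi.
rewrite ln_div ?posrE // in h1. rewrite lnV ?posrE // in h2.
have e : a * (x / y - 1) + (1 - a) * (y^-1 - 1) = 0.
  rewrite /y; field; rewrite -/y; exact: lt0r_neq0.
have : a * (ln x - ln y) + (1 - a) * (- ln y) <= 0.
  rewrite -e; apply: lerD; [apply: ler_wpM2l => //; exact: ltW|].
  apply: ler_wpM2l; lra.
lra.
Qed.

Lemma ln1Dx_ge {x : R} : -1 < x -> x / (1 + x) <= ln (1 + x).
Proof.
move=> hx; have p : 0 < 1 + x by lra.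
have := ln_le_sub1 (_ : 0 < (1+x)^-1); rewrite ?invr_gt0 //; rewrite lnV ?posrE //.
have -> : (1 + x)^-1 - 1 = - (x / (1 + x)) by field; exact: lt0r_neq0.
lra.
Qed.

End RealLemmas.

End P1M.
Import P1M.

Module P2M.
Import Pilot.Defs.
Set Implicit Arguments. Unset Strict Implicit.
Local Open Scope ring_scope.

Section Eta.
Variable R : realType.
Variable kap : R.
Hypothesis hkap : 2^-1 <= kap.

Definition etaf (s : R) : R := Num.min (2^-1) (Num.sqrt (kap / (1 + s))).

Lemma kap_gt0 : 0 < kap. Proof. move: hkap; lra. Qed.

Lemma etaf_gt0 s : 0 <= s -> 0 < etaf s.
Proof.
move=> s0; rewrite /etaf lt_min; apply/andP; split; first lra.
rewrite sqrtr_gt0 divr_gt0 //; [exact: kap_gt0|lra].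
Qed.

Lemma etaf_le s : etaf s <= 2^-1.
Proof. by rewrite /etaf ge_min lexx. Qed.

Lemma etaf_le_sqrt s : etaf s <= Num.sqrt (kap / (1 + s)).
Proof. by rewrite /etaf ge_min lexx orbT. Qed.

Lemma etaf_mono s s' : 0 <= s -> s <= s' -> etaf s' <= etaf s.
Proof.
move=> s0 ss; rewrite /etaf le_min; apply/andP; split.
  by rewrite ge_min lexx.
rewrite ge_min; apply/orP; right; apply: ler_wsqrtr.
have k0 := kap_gt0.
rewrite ler_pdivrMr; last lra.
rewrite mulrAC ler_pdivlMr; last lra.
apply: ler_wpM2l; lra.
Qed.

Lemma etaf0 : etaf 0 = 2^-1.
Proof.
rewrite /etaf addr0 divr1 min_l //.
have -> : (2^-1 : R) = Num.sqrt ((2^-1) ^+ 2) by rewrite sqrtr_sqr ger0_norm.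
apply: ler_wsqrtr; have h2 : 2 * 2^-1 = 1 :> R by field.
move: hkap; rewrite expr2; nra.
Qed.

Lemma etaf_low (T : R) s : 0 <= s -> s <= T -> 1 <= 2 * (1 + T) * etaf s.
Proof.
move=> s0 sT; have k0 := kap_gt0; have hk := hkap; rewrite /etaf.
have [h|h] := leP (2^-1) (Num.sqrt (kap / (1 + s))).
  have h2 : 2 * 2^-1 = 1 :> R by field. lra.
set q := Num.sqrt _ in h *.
have q0 : 0 <= q by apply: sqrtr_ge0.
have qq : q ^+ 2 = kap / (1 + s) by rewrite sqr_sqrtr // divr_ge0 //; lra.
have qk : q ^+ 2 * (1 + s) = kap by rewrite qq mulfVK //; lra.
rewrite leNgt; apply/negP => hlt.
have h1 : q * (1 + s) < 2^-1.
  have : q * (2 * (1 + T)) < 1 by lra.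
  nra.
nra.
Qed.

Lemma inv_etaf s : 0 <= s -> (etaf s)^-1 <= 2 + Num.sqrt (1 + s) / Num.sqrt kap.
Proof.
move=> s0; have k0 := kap_gt0.
have sk : 0 < Num.sqrt kap by rewrite sqrtr_gt0.
have s1 : 0 < Num.sqrt (1 + s) by rewrite sqrtr_gt0; lra.
rewrite /etaf; have [h|h] := leP (2^-1) (Num.sqrt (kap / (1 + s))).
  rewrite invrK; rewrite lerDl; apply: divr_ge0; exact: ltW.
rewrite sqrtrM; last exact: ltW.
rewrite sqrtrV; last lra.
rewrite invfM invrK mulrC lerDr; lra.
Qed.

Lemma sqrt_step (a q : R) : 1 <= a -> 0 <= q <= 1 ->
  q / Num.sqrt a <= 3 * (Num.sqrt (a + q) - Num.sqrt a).
Proof.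
move=> a1 /andP[q0 q1].
set u := Num.sqrt a; set v := Num.sqrt (a + q).
have u2 : u ^+ 2 = a by rewrite sqr_sqrtr //; lra.
have v2 : v ^+ 2 = a + q by rewrite sqr_sqrtr //; lra.
have u0 : 0 <= u by apply: sqrtr_ge0.
have v0 : 0 <= v by apply: sqrtr_ge0.
have u1 : 1 <= u by rewrite -(sqrtr1 R) ler_wsqrtr.
have vu : u <= v by apply: ler_wsqrtr; lra.
have v2u : v <= 2 * u.
  rewrite leNgt; apply/negP => h. nra.
rewrite ler_pdivrMr; last lra.
nra.
Qed.

End Eta.

End P2M.
Import P2M.

Module P3M.
Import Pilot.Defs.
Set Implicit Arguments. Unset Strict Implicit.
Local Open Scope ring_scope.

Section AMLP.
Variables (R : realType) (K T : nat).
Let kap : R := ln (K%:R : R).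
Hypothesis hK : 2^-1 <= kap.
Hypothesis hK0 : (0 < K)%N.
Variables w S r : nat -> nat -> R.
Let e t i := etaf kap (S t i).
Hypothesis hw0 : forall i, w 0%N i = K%:R^-1.
Hypothesis hS0 : forall i, S 0%N i = 0.
Hypothesis hS : forall t i, S t.+1 i = S t i + r t.+1 i ^+ 2.
Hypothesis hw : forall t i,
  w t.+1 i = (w t i * (1 + e t i * r t.+1 i)) `^ (e t.+1 i / e t i).
Hypothesis hr : forall t i, (t < T)%N -> (i < K)%N ->
  (forall j, (j < K)%N -> 0 < w t j) -> -1 <= r t.+1 i <= 1.
Hypothesis hz : forall t, (t < T)%N -> (forall j, (j < K)%N -> 0 < w t j) ->
  \sum_(i < K) e t i * w t i * r t.+1 i = 0.

Lemma S_ge0 t i : 0 <= S t i.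
Proof.
elim: t => [|t IH]; first by rewrite hS0.
by rewrite hS addr_ge0 // sqr_ge0.
Qed.

Lemma e_pos t i : (t <= T)%N -> (i < K)%N -> 0 < e t i.
Proof. by move=> _ _; apply: etaf_gt0 => //; exact: S_ge0. Qed.

Lemma e_le t i : e t i <= 2^-1.
Proof. exact: etaf_le. Qed.

Lemma er_bound_gen t i : (t < T)%N -> (i < K)%N ->
  (forall j, (j < K)%N -> 0 < w t j) ->
  - 2^-1 <= e t i * r t.+1 i <= 2^-1.
Proof.
move=> tT iK hwp; have e0 := e_pos (ltnW tT) iK; have e1 := e_le t i.
have /andP[r1 r2] := hr tT iK hwp.
apply/andP; split; nra.
Qed.

Lemma w_pos_all t : (t <= T)%N -> forall i, (i < K)%N -> 0 < w t i.
Proof.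
elim: t => [|t IH] tT i iK; first by rewrite hw0 invr_gt0 ltr0n.
rewrite hw; apply: powR_gt0; apply: mulr_gt0; first exact: IH (ltnW tT) i iK.
have /andP[h1 h2] := er_bound_gen tT iK (IH (ltnW tT)).
have h : 2 * 2^-1 = 1 :> R by field.
lra.
Qed.

Lemma w_pos t i : (t <= T)%N -> (i < K)%N -> 0 < w t i.
Proof. by move=> tT iK; apply: w_pos_all. Qed.

Lemma hr' t i : (t < T)%N -> (i < K)%N -> -1 <= r t.+1 i <= 1.
Proof. by move=> tT iK; apply: hr => //; apply: w_pos_all; apply: ltnW. Qed.

Lemma er_bound t i : (t < T)%N -> (i < K)%N ->
  - 2^-1 <= e t i * r t.+1 i <= 2^-1.
Proof. by move=> tT iK; apply: er_bound_gen => //; apply: w_pos_all; apply: ltnW. Qed.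

Lemma S_bounds t i : (t <= T)%N -> (i < K)%N -> 0 <= S t i <= t%:R.
Proof.
elim: t => [|t IH] tT iK; first by rewrite hS0 lexx.
have /andP[h1 h2] := IH (ltnW tT) iK.
have /andP[r1 r2] := hr' tT iK.
rewrite hS -natr1; apply/andP; split; nra.
Qed.

Lemma W_bound t : (t <= T)%N ->
  \sum_(i < K) w t i <= 1 + \sum_(i < K) (ln (e 0%N i) - ln (e t i)).
Proof.
elim: t => [|t IH] tT.
  under eq_bigr do rewrite hw0.
  under [X in _ <= 1 + X]eq_bigr do rewrite subrr.
  rewrite sumr_const card_ord big1 // addr0 -[_ *+ K]mulr_natr mulVf //.
  by rewrite pnatr_eq0 -lt0n.
have IH' := IH (ltnW tT).
have step : forall i : 'I_K, w t.+1 i <=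
   w t i * (1 + e t i * r t.+1 i) + (ln (e t i) - ln (e t.+1 i)).
  move=> i.
  have ea := e_pos (ltnW tT) (ltn_ord i).
  have eb := e_pos tT (ltn_ord i).
  have eba : e t.+1 i <= e t i.
    rewrite /e; apply: (etaf_mono hK).
    - by case/andP: (S_bounds (ltnW tT) (ltn_ord i)).
    - rewrite hS lerDl; exact: sqr_ge0.
  have x0 : 0 < w t i * (1 + e t i * r t.+1 i).
    apply: mulr_gt0; first exact: w_pos (ltnW tT) (ltn_ord i).
    have /andP[h1 h2] := er_bound tT (ltn_ord i).
    have h : 2 * 2^-1 = 1 :> R by field. lra.
  set x := w t i * _ in x0 *.
  set a := e t.+1 i / e t i.
  have a0 : 0 < a by apply: divr_gt0.
  have a1 : a <= 1 by rewrite ler_pdivrMr // mul1r.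
  rewrite hw -/x -/a.
  have hb := powR_bern x0 (introT andP (conj a0 a1)).
  have hl := ln_le_sub1 a0.
  rewrite ln_div ?posrE // in hl.
  have : a * x <= x by rewrite -[X in _ <= X]mul1r; apply: ler_wpM2r => //; exact: ltW.
  lra.
apply: le_trans; first exact: (ler_sum _ (fun i _ => step i)).
rewrite big_split /=.
have -> : \sum_(i < K) w t i * (1 + e t i * r t.+1 i) = \sum_(i < K) w t i.
  under eq_bigr do rewrite mulrDr mulr1.
  rewrite big_split /=.
  have -> : \sum_(i < K) w t i * (e t i * r t.+1 i) = 0.
    rewrite -[RHS](hz tT (w_pos_all (ltnW tT))); apply: eq_bigr => i _; ring.
  by rewrite addr0.
have -> : \sum_(i < K) (ln (e 0%N i) - ln (e t.+1 i)) =
   \sum_(i < K) (ln (e 0%N i) - ln (e t i)) + \sum_(i < K) (ln (e t i) - ln (e t.+1 i)).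
  rewrite -big_split /=; apply: eq_bigr => i _; ring.
lra.
Qed.

Lemma e0_eq i : e 0%N i = 2^-1.
Proof. by rewrite /e hS0 etaf0. Qed.

Lemma Phi_bound t i : (t <= T)%N -> (i < K)%N ->
  -2 * kap + \sum_(s < t) (r s.+1 i - 2 * e s i * r s.+1 i ^+ 2)
    <= ln (w t i) / e t i.
Proof.
move=> + iK; elim: t => [|t IH] tT.
  rewrite big_ord0 addr0 hw0 e0_eq lnV ?posrE ?ltr0n // -/kap.
  rewrite invrK; lra.
rewrite big_ord_recr /=.
have IH' := IH (ltnW tT).
have ea := e_pos (ltnW tT) iK.
have eb := e_pos tT iK.
have wp := w_pos (ltnW tT) iK.
have /andP[y1 y2] := er_bound tT iK.
set y := e t i * r t.+1 i in y1 y2.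
have h2 : 2 * 2^-1 = 1 :> R by field.
have yp : 0 < 1 + y by lra.
rewrite hw ln_powR lnM ?posrE // -/y.
have -> : e t.+1 i / e t i * (ln (w t i) + ln (1 + y)) / e t.+1 i =
   ln (w t i) / e t i + ln (1 + y) / e t i.
  field; apply/andP; split; exact: lt0r_neq0.
have hl : y - 2 * y ^+ 2 <= ln (1 + y).
  apply: le_trans (ln1Dx_ge (_ : -1 < y)); last lra.
  rewrite ler_pdivlMr //.
  have : 0 <= y ^+ 2 * (1 + 2 * y) by apply: mulr_ge0; [exact: sqr_ge0|lra].
  move=> h; rewrite -subr_ge0; apply: le_trans h _; rewrite le_eqVlt; apply/orP; left; apply/eqP; ring.
have : (y - 2 * y ^+ 2) / e t i <= ln (1 + y) / e t i.
  by rewrite ler_pM2r ?invr_gt0.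
have -> : (y - 2 * y ^+ 2) / e t i = r t.+1 i - 2 * e t i * r t.+1 i ^+ 2.
  rewrite /y; field; exact: lt0r_neq0.
lra.
Qed.

Lemma sumsq_bound t i : (t <= T)%N -> (i < K)%N ->
  \sum_(s < t) e s i * r s.+1 i ^+ 2 <=
    3 * Num.sqrt kap * (Num.sqrt (1 + S t i) - 1).
Proof.
move=> + iK; elim: t => [|t IH] tT.
  by rewrite big_ord0 hS0 addr0 sqrtr1 subrr mulr0.
rewrite big_ord_recr /=.
have IH' := IH (ltnW tT).
have /andP[S0 _] := S_bounds (ltnW tT) iK.
have /andP[r1 r2] := hr' tT iK.
have k0 : 0 < kap by move: hK; lra.
have sk : 0 <= Num.sqrt kap by apply: sqrtr_ge0.
have q01 : 0 <= r t.+1 i ^+ 2 <= 1.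
  apply/andP; split; first exact: sqr_ge0. rewrite expr2; nra.
have hs := sqrt_step (_ : 1 <= 1 + S t i) q01.
have hss : e t i * r t.+1 i ^+ 2 <=
    Num.sqrt kap * (r t.+1 i ^+ 2 / Num.sqrt (1 + S t i)).
  have he := etaf_le_sqrt kap (S t i).
  rewrite sqrtrM in he; last exact: ltW.
  rewrite sqrtrV in he; last lra.
  have -> : Num.sqrt kap * (r t.+1 i ^+ 2 / Num.sqrt (1 + S t i)) =
    Num.sqrt kap * (Num.sqrt (1 + S t i))^-1 * r t.+1 i ^+ 2 by ring.
  apply: ler_wpM2r => //; by case/andP: q01.
rewrite hS addrA.
have : Num.sqrt kap * (r t.+1 i ^+ 2 / Num.sqrt (1 + S t i)) <=
   Num.sqrt kap * (3 * (Num.sqrt (1 + S t i + r t.+1 i ^+ 2) - Num.sqrt (1 + S t i))).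
  apply: ler_wpM2l => //; apply: hs; lra.
move: IH' hss; set A := Num.sqrt kap; set u := Num.sqrt (1 + S t i);
  set v := Num.sqrt _; set q := r t.+1 i ^+ 2.
move=> IH' hss hh.
have : A * (3 * (v - u)) + 3 * A * (u - 1) = 3 * A * (v - 1) by ring.
lra.
Qed.

Lemma ln_e_bound i : (i < K)%N ->
  ln (e 0%N i) - ln (e T i) <= ln (1 + T%:R).
Proof.
move=> iK.
have eT := e_pos (leqnn T) iK.
have /andP[S0 ST] := S_bounds (leqnn T) iK.
have hl := etaf_low hK S0 ST.
rewrite e0_eq.
have h2 : 2 * 2^-1 = 1 :> R by field.
have T0 : 0 < 1 + T%:R :> R by rewrite ltr_pwDl // ler0n.
have hh : 2^-1 <= (1 + T%:R) * e T i by move: hl; rewrite /e; nra.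
have : ln (2^-1 : R) <= ln ((1 + T%:R) * e T i).
  rewrite ler_ln ?posrE ?mulr_gt0 //; lra.
rewrite lnM ?posrE //; lra.
Qed.

Theorem amlp_bound i : (i < K)%N ->
  \sum_(s < T) r s.+1 i <=
    2 * ln (1 + K%:R * ln (1 + T%:R)) + 2 * kap + Num.sqrt (1 + S T i) *
     (ln (1 + K%:R * ln (1 + T%:R)) / Num.sqrt kap + 6 * Num.sqrt kap).
Proof.
move=> iK; set B := ln (1 + K%:R * ln (1 + T%:R)).
have hP := Phi_bound (leqnn T) iK.
have hQ := sumsq_bound (leqnn T) iK.
have hW := W_bound (leqnn T).
have eT := e_pos (leqnn T) iK.
have /andP[S0 ST] := S_bounds (leqnn T) iK.
have k0 : 0 < kap by move: hK; lra.
have sk : 0 < Num.sqrt kap by rewrite sqrtr_gt0.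
have lT : 0 <= ln (1 + T%:R : R) by apply: ln_ge0; rewrite lerDl.
have B0 : 0 <= B by apply: ln_ge0; rewrite lerDl; apply: mulr_ge0 => //; exact: ler0n.
have wW : w T i <= \sum_(j < K) w T j.
  rewrite (bigD1 (Ordinal iK)) //= lerDl; apply: sumr_ge0 => j _.
  exact: ltW (w_pos (leqnn T) (ltn_ord j)).
have hsum : \sum_(j < K) (ln (e 0%N j) - ln (e T j)) <= K%:R * ln (1 + T%:R).
  apply: le_trans (ler_sum _ (fun j _ => ln_e_bound (ltn_ord j))) _.
  by rewrite sumr_const card_ord mulr_natl.
have wp := w_pos (leqnn T) iK.
have hlw : ln (w T i) <= B.
  rewrite /B ler_ln ?posrE //; first lra.
  by rewrite ltr_pwDl // mulr_ge0 // ler0n.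
have hinv := inv_etaf hK S0.
have hB : ln (w T i) / e T i <= B * (2 + Num.sqrt (1 + S T i) / Num.sqrt kap).
  apply: le_trans (_ : B / e T i <= _).
    by rewrite ler_pM2r ?invr_gt0.
  exact: ler_wpM2l.
have su : 0 <= Num.sqrt (1 + S T i) by apply: sqrtr_ge0.
have -> : Num.sqrt (1 + S T i) * (B / Num.sqrt kap + 6 * Num.sqrt kap) =
  B * (Num.sqrt (1 + S T i) / Num.sqrt kap) + 6 * (Num.sqrt kap * Num.sqrt (1 + S T i)) by ring.
rewrite mulrDr in hB.
have eP : \sum_(s < T) (r s.+1 i - 2 * e s i * r s.+1 i ^+ 2) =
   \sum_(s < T) r s.+1 i - 2 * \sum_(s < T) e s i * r s.+1 i ^+ 2.
  rewrite sumrB mulr_sumr; congr (_ - _); apply: eq_bigr => s _; ring.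
rewrite eP in hP.
have : 3 * Num.sqrt kap * (Num.sqrt (1 + S T i) - 1) <= 3 * (Num.sqrt kap * Num.sqrt (1 + S T i)).
  have : 0 <= 3 * Num.sqrt kap by apply: mulr_ge0 => //; exact: ltW.
  move=> h; rewrite mulrBr mulr1 -mulrA lerBlDr lerDl //.
lra.
Qed.

End AMLP.

End P3M.
Import P3M.

Module P4M.
Import Pilot.Defs.
Set Implicit Arguments. Unset Strict Implicit.
Local Open Scope ring_scope.

Section Vec.
Variables (R : realType) (d : nat).
Notation vec := 'rV[R]_d.

Lemma dotC (u v : vec) : dot u v = dot v u.
Proof. by apply: eq_bigr => i _; rewrite mulrC. Qed.

Lemma dotDr (u v w : vec) : dot u (v + w) = dot u v + dot u w.
Proof. by rewrite /dot -big_split; apply: eq_bigr => i _; rewrite mxE mulrDr. Qed.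

Lemma dotNr (u v : vec) : dot u (- v) = - dot u v.
Proof. by rewrite /dot -sumrN; apply: eq_bigr => i _; rewrite mxE mulrN. Qed.

Lemma dotBr (u v w : vec) : dot u (v - w) = dot u v - dot u w.
Proof. by rewrite dotDr dotNr. Qed.

Lemma dotZr (u v : vec) a : dot u (a *: v) = a * dot u v.
Proof. by rewrite /dot mulr_sumr; apply: eq_bigr => i _; rewrite mxE mulrCA. Qed.

Lemma dot0r (u : vec) : dot u 0 = 0.
Proof. by rewrite /dot big1 // => i _; rewrite mxE mulr0. Qed.

Lemma dot_sumr (u : vec) n (F : nat -> vec) :
  dot u (\sum_(i < n) F i) = \sum_(i < n) dot u (F i).
Proof.
elim: n => [|n IH]; first by rewrite !big_ord0 dot0r.
by rewrite !big_ord_recr /= dotDr IH.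
Qed.

Lemma dot_ge0 (u : vec) : 0 <= dot u u.
Proof. by apply: sumr_ge0 => i _; rewrite -expr2 sqr_ge0. Qed.

Lemma enorm_sq (u : vec) : enorm u ^+ 2 = dot u u.
Proof. by rewrite /enorm sqr_sqrtr // dot_ge0. Qed.

Lemma enorm_ge0 (u : vec) : 0 <= enorm u.
Proof. exact: sqrtr_ge0. Qed.

Lemma cauchy_schwarz (u v : vec) : dot u v ^+ 2 <= dot u u * dot v v.
Proof.
set a := dot u u; set b := dot u v; set c := dot v v.
have a0 : 0 <= a by apply: dot_ge0.
have h : 0 <= \sum_(i < d) (a * v 0 i - b * u 0 i) ^+ 2 by apply: sumr_ge0 => i _; exact: sqr_ge0.
have e : \sum_(i < d) (a * v 0 i - b * u 0 i) ^+ 2 = a * (a * c - b ^+ 2).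
  have -> : \sum_(i < d) (a * v 0 i - b * u 0 i) ^+ 2 =
     \sum_(i < d) (a ^+ 2 * (v 0 i * v 0 i) - 2 * a * b * (u 0 i * v 0 i) + b ^+ 2 * (u 0 i * u 0 i)).
    by apply: eq_bigr => i _; ring.
  rewrite big_split sumrB /= -!mulr_sumr -/a -/b -/c /dot; rewrite -/(dot u v) -/(dot u u) -/(dot v v) -/a -/b -/c.
  ring.
rewrite e in h.
have [a_0|a_pos] := eqVneq a 0.
  have hu : forall i : 'I_d, u 0 i * u 0 i = 0.
    move=> i; apply: (psumr_eq0P (P := predT) (F := fun i => u 0 i * u 0 i)) => //.
    by move=> j _; rewrite -expr2 sqr_ge0.
  have -> : b = 0.
    rewrite /b /dot big1 // => i _.
    have := hu i; move/eqP; rewrite mulf_eq0 orbb => /eqP ->; by rewrite mul0r.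
  by rewrite expr0n /= a_0 mul0r.
have ap : 0 < a by rewrite lt_def a_pos a0.
have := h; rewrite pmulr_rge0 //; lra.
Qed.

Lemma dot_le (u v : vec) : dot u v <= enorm u * enorm v.
Proof.
have h := cauchy_schwarz u v.
rewrite -!enorm_sq in h.
have n0 := enorm_ge0 u; have n1 := enorm_ge0 v.
have [hl|hl] := leP (dot u v) 0; first exact: le_trans hl (mulr_ge0 _ _).
rewrite -exprMn in h.
by rewrite -(ler_pXn2r (n := 2)) // ?nnegrE ?mulr_ge0 //; apply: ltW.
Qed.

Lemma dot_abs (u v : vec) : `|dot u v| <= enorm u * enorm v.
Proof.
have [h|h] := leP 0 (dot u v); first by rewrite ger0_norm //; exact: dot_le.
rewrite ltr0_norm // -dotNr.
have := dot_le u (- v).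
have -> : enorm (- v) = enorm v by rewrite /enorm /dot; congr Num.sqrt; apply: eq_bigr => i _; rewrite mxE mulrNN.
done.
Qed.

Lemma dot_sq_le (u v : vec) : dot u v ^+ 2 <= enorm u ^+ 2 * enorm v ^+ 2.
Proof. by rewrite !enorm_sq; exact: cauchy_schwarz. Qed.

Lemma convex_sum (X : set vec) : convex_set X -> forall n (p : nat -> R) (x : nat -> vec),
  (forall i, (i < n)%N -> 0 <= p i) -> (forall i, (i < n)%N -> X (x i)) ->
  \sum_(i < n) p i = 1 -> X (\sum_(i < n) p i *: x i).
Proof.
move=> hX; elim=> [|n IH] p x hp hx hs.
  by move: hs; rewrite big_ord0 => /eqP; rewrite eq_sym oner_eq0.
move: hs; rewrite !big_ord_recr /= => hs.
set s := \sum_(i < n) p i in hs.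
have s0 : 0 <= s by apply: sumr_ge0 => i _; exact: hp (ltnW (ltn_ord _)).
have pn0 := hp n (ltnSn n).
have [s_0|s_pos] := eqVneq s 0.
  have hz : forall i : 'I_n, p i = 0.
    move=> i; apply: (psumr_eq0P (P := predT) (F := fun i : 'I_n => p i)) => //.
    by move=> j _; exact: hp (ltnW (ltn_ord _)).
  rewrite big1; last by move=> i _; rewrite hz scale0r.
  rewrite add0r; have -> : p n = 1 by move: hs; rewrite s_0 add0r.
  by rewrite scale1r; apply: hx.
have sp : 0 < s by rewrite lt_def s_pos s0.
have hy := IH (fun i => p i / s) x.
have hy' : X (\sum_(i < n) (p i / s) *: x i).
  apply: hy.
  - by move=> i ilt; apply: divr_ge0 => //; exact: hp (ltnW ilt).
  - by move=> i ilt; apply: hx; apply: ltnW.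
  - by rewrite -mulr_suml -/s mulfV.
have := hX (x n) _ (p n) (hx n (ltnSn n)) hy'.
have -> : (1 - p n) = s by lra.
rewrite scaler_sumr.
have -> : \sum_(i < n) s *: (p i / s *: x i) = \sum_(i < n) p i *: x i.
  apply: eq_bigr => i _; rewrite scalerA; congr (_ *: _); field; exact: s_pos.
rewrite addrC; apply; apply/andP; split => //; lra.
Qed.

End Vec.

End P4M.
Import P4M.

Module P5M.
Import Pilot.Defs.
Set Implicit Arguments. Unset Strict Implicit.
Local Open Scope ring_scope.

Section USCproof.
Variables (R : realType) (d : nat) (X : set 'rV[R]_d) (G D H : R) (T : nat)
  (fs : nat -> 'rV[R]_d -> R) (xbar : 'rV[R]_d) (es : seq (alg R d)).
Let K := size es.
Definition st t := usc_state G D xbar es fs t.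
Definition ww t := (st t).1.
Definition SS t := (st t).2.
Definition xt t := combine es fs (ww t.-1) (SS t.-1) t.
Definition loss t i := loss_i G D xbar es fs (xt t) t i.
Definition lbar t := \sum_(i < K) probs es (ww t.-1) (SS t.-1) i * loss t i.
Definition rr t i := lbar t - loss t i.

Lemma st_succ t : st t.+1 =
  (fun i => (ww t i * (1 + eta_of es (SS t) i * rr t.+1 i)) `^
             (eta_of es (fun j => SS t j + rr t.+1 j ^+ 2) i / eta_of es (SS t) i),
   fun i => SS t i + rr t.+1 i ^+ 2).
Proof.
rewrite /rr /lbar /loss /xt /ww /SS /st /=.
by case: (usc_state G D xbar es fs t).
Qed.

Lemma usc_xt t : usc G D xbar es fs t = xt t.
Proof. by rewrite /usc /xt /ww /SS /st; case: (usc_state G D xbar es fs t.-1). Qed.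

Lemma hS t i : SS t.+1 i = SS t i + rr t.+1 i ^+ 2.
Proof. by rewrite {1}/SS st_succ. Qed.

Lemma hw t i : ww t.+1 i = (ww t i * (1 + etaf (ln (K%:R : R)) (SS t i) * rr t.+1 i)) `^
   (etaf (ln (K%:R : R)) (SS t.+1 i) / etaf (ln (K%:R : R)) (SS t i)).
Proof. by rewrite {1}/ww st_succ /= hS. Qed.

Lemma hw0 i : ww 0 i = K%:R^-1. Proof. by []. Qed.
Lemma hS0 i : SS 0 i = 0. Proof. by []. Qed.

Hypothesis hG : 0 < G.
Hypothesis hD : 0 < D.
Hypothesis hdom : domain_ok X D.
Hypothesis hset : setting X G H T fs.
Hypothesis hes : forall i t, (i < K)%N -> X (expert_out es fs i t).
Hypothesis hxbar : X xbar.
Hypothesis hK : 2^-1 <= ln (K%:R : R).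

Lemma hK0 : (0 < K)%N.
Proof.
rewrite lt0n; apply/negP => /eqP K0; move: hK; rewrite K0 ln0 //.
have h : 2 * 2^-1 = 1 :> R by field. lra.
Qed.

Lemma SS_ge0 t i : 0 <= SS t i.
Proof. elim: t => [|t IH]; first by rewrite hS0. by rewrite hS addr_ge0 // sqr_ge0. Qed.

Lemma eta_pos t i : 0 < eta_of es (SS t) i.
Proof. exact: (etaf_gt0 hK (SS_ge0 t i)). Qed.

Section Pos.
Variable t : nat.
Hypothesis wpos : forall j, (j < K)%N -> 0 < ww t j.

Let Z := \sum_(j < K) eta_of es (SS t) j * ww t j.

Lemma Z_pos : 0 < Z.
Proof.
rewrite /Z (bigD1 (Ordinal hK0)) //=.
have h1 : 0 < eta_of es (SS t) 0 * ww t 0 by apply: mulr_gt0; [exact: eta_pos|exact: wpos hK0].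
have h2 : 0 <= \sum_(i < K | i != Ordinal hK0) eta_of es (SS t) i * ww t i.
  apply: sumr_ge0 => j _; apply: mulr_ge0; [exact: ltW (eta_pos _ _)|exact: ltW (wpos (ltn_ord j))].
lra.
Qed.

Lemma probs_ge0 i : (i < K)%N -> 0 <= probs es (ww t) (SS t) i.
Proof.
move=> iK; rewrite /probs -/K -/Z; apply: divr_ge0; last exact: ltW Z_pos.
by apply: mulr_ge0; [exact: ltW (eta_pos _ _)|exact: ltW (wpos iK)].
Qed.

Lemma probs_sum : \sum_(i < K) probs es (ww t) (SS t) i = 1.
Proof.
rewrite /probs -/K -/Z -mulr_suml -/Z mulfV //; exact: lt0r_neq0 Z_pos.
Qed.

Lemma xt_in : X (xt t.+1).
Proof.
rewrite /xt /combine /=; case: hdom => _ _ hconv _.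
have := @convex_sum R d X hconv K (fun i => probs es (ww t) (SS t) i)
  (fun i => expert_out es fs i t.+1).
apply.
- move=> i iK; exact: probs_ge0.
- move=> i iK; exact: hes.
- exact: probs_sum.
Qed.

Hypothesis tT : (t < T)%N.

Let g := grad (fs t.+1) (xt t.+1).

Lemma g_le : enorm g <= G.
Proof.
have := hset (_ : (1 <= t.+1 <= T)%N); rewrite tT /= => /(_ isT).
by case => _ _ hg _ _; apply: hg; exact: xt_in.
Qed.

Lemma dot_bound (y : 'rV[R]_d) : X y -> `|dot g (y - xbar)| <= G * D.
Proof.
move=> Xy; apply: le_trans (dot_abs _ _) _.
case: hdom => _ _ _ hdiam.
apply: ler_pM; [exact: enorm_ge0|exact: enorm_ge0|exact: g_le|exact: hdiam].
Qed.

Lemma loss_bounds i : (i < K)%N -> 0 <= loss t.+1 i <= 1.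
Proof.
move=> iK; rewrite /loss /loss_i -/g.
have := dot_bound (@hes i t.+1 iK); rewrite ler_norml => /andP[h1 h2].
have GD : 0 < G * D by apply: mulr_gt0.
apply/andP; split.
  apply: divr_ge0; [lra| rewrite -mulrA; apply: mulr_ge0 => //; lra].
rewrite ler_pdivrMr; last by rewrite -mulrA; apply: mulr_gt0 => //.
rewrite mul1r -mulrA; lra.
Qed.

Lemma lbar_bounds : 0 <= lbar t.+1 <= 1.
Proof.
rewrite /lbar /=; apply/andP; split.
  apply: sumr_ge0 => i _; apply: mulr_ge0; first exact: probs_ge0.
  by case/andP: (loss_bounds (ltn_ord i)).
rewrite -probs_sum; apply: ler_sum => i _.
rewrite -[X in _ <= X]mulr1; apply: ler_wpM2l; first exact: probs_ge0.
by case/andP: (loss_bounds (ltn_ord i)).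
Qed.

Lemma rr_bounds i : (i < K)%N -> -1 <= rr t.+1 i <= 1.
Proof.
move=> iK; rewrite /rr; have /andP[a b] := lbar_bounds.
have /andP[c e] := loss_bounds iK.
apply/andP; split; lra.
Qed.

Lemma hz_t : \sum_(i < K) etaf (ln (K%:R : R)) (SS t i) * ww t i * rr t.+1 i = 0.
Proof.
have Zn : Z != 0 by exact: lt0r_neq0 Z_pos.
have eL : lbar t.+1 = (\sum_(i < K) eta_of es (SS t) i * ww t i * loss t.+1 i) / Z.
  rewrite /lbar /= mulr_suml; apply: eq_bigr => i _; rewrite /probs -/K -/Z.
  by rewrite mulrAC.
rewrite /rr.
under eq_bigr do rewrite mulrBr.
rewrite sumrB -mulr_suml -/Z eL.
have -> : \sum_(i < K) etaf (ln (K%:R : R)) (SS t i) * ww t i * loss t.+1 i =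
   \sum_(i < K) eta_of es (SS t) i * ww t i * loss t.+1 i by [].
field; exact: Zn.
Qed.

Lemma rr_eq i : (i < K)%N ->
  rr t.+1 i = dot g (xt t.+1 - expert_out es fs i t.+1) / (2 * G * D).
Proof.
move=> iK.
have GD : 2 * G * D != 0 by apply: lt0r_neq0; rewrite -mulrA; apply: mulr_gt0 => //; apply: mulr_gt0.
have ex : xt t.+1 = \sum_(j < K) probs es (ww t) (SS t) j *: expert_out es fs j t.+1 by [].
have eL : lbar t.+1 * (2 * G * D) = dot g (xt t.+1 - xbar) + G * D.
  rewrite /lbar /= mulr_suml.
  have -> : \sum_(i < K) probs es (ww t) (SS t) i * loss t.+1 i * (2 * G * D) =
     \sum_(i < K) (probs es (ww t) (SS t) i * dot g (expert_out es fs i t.+1) +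
                  probs es (ww t) (SS t) i * (G * D - dot g xbar)).
    apply: eq_bigr => k _; rewrite /loss /loss_i -/g dotBr; field.
    by rewrite !lt0r_neq0.
  rewrite big_split /= -mulr_suml probs_sum mul1r dotBr ex (@dot_sumr R d g K (fun j => probs es (ww t) (SS t) j *: expert_out es fs j t.+1)).
  under [in RHS]eq_bigr do rewrite dotZr.
  ring.
rewrite /rr /loss /loss_i -/g.
apply: (mulIf GD); rewrite mulrBl eL !divfK // !dotBr. ring.
Qed.

End Pos.

Lemma ww_pos t : (t <= T)%N -> forall j, (j < K)%N -> 0 < ww t j.
Proof.
elim: t => [|t IH] tT j jK; first by rewrite hw0 invr_gt0 ltr0n hK0.
have IH' := IH (ltnW tT).
rewrite hw; apply: powR_gt0; apply: mulr_gt0; first exact: IH'.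
have /andP[r1 r2] := rr_bounds IH' tT jK.
have e0 := etaf_gt0 hK (SS_ge0 t j); have e1 := etaf_le (ln (K%:R : R)) (SS t j).
have h : 2 * 2^-1 = 1 :> R by field.
move: e0 e1; set e := etaf _ _ => e0 e1.
have : - e <= e * rr t.+1 j by nra.
lra.
Qed.

Lemma SS_sum t i : SS t i = \sum_(s < t) rr s.+1 i ^+ 2.
Proof. elim: t => [|t IH]; first by rewrite hS0 big_ord0. by rewrite hS IH big_ord_recr. Qed.

Lemma usc_amlp i : (i < K)%N ->
  \sum_(s < T) rr s.+1 i <=
    2 * ln (1 + K%:R * ln (1 + T%:R)) + 2 * ln (K%:R : R) + Num.sqrt (1 + SS T i) *
     (ln (1 + K%:R * ln (1 + T%:R)) / Num.sqrt (ln (K%:R : R)) + 6 * Num.sqrt (ln (K%:R : R))).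
Proof.
move=> iK.
apply: (@amlp_bound R K T hK hK0 ww SS rr hw0 hS0 hS hw _ _ i iK).
- move=> t j tT jK wp; exact: rr_bounds.
- move=> t tT wp; exact: hz_t.
Qed.

Variable lam : R.
Hypothesis hlam : 0 < lam.
Hypothesis hsc : forall t, (1 <= t <= T)%N -> strongly_convex_on X lam (fs t).

Lemma round_bound t i : (t < T)%N -> (i < K)%N ->
  fs t.+1 (xt t.+1) - fs t.+1 (expert_out es fs i t.+1) <=
    2 * G * D * rr t.+1 i - 2 * lam * D ^+ 2 * rr t.+1 i ^+ 2.
Proof.
move=> tT iK.
have wp := ww_pos (ltnW tT).
have Xx := xt_in wp.
have Xy := @hes i t.+1 iK.
have hs := hsc (_ : (1 <= t.+1 <= T)%N); rewrite tT /= in hs.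
have := hs isT _ _ Xx Xy.
set g := grad (fs t.+1) (xt t.+1).
set y := expert_out es fs i t.+1; set x := xt t.+1.
have er := rr_eq wp iK; rewrite -/g -/x -/y in er.
have GD : 0 < 2 * G * D by rewrite -mulrA; apply: mulr_gt0 => //; apply: mulr_gt0.
have edot : dot g (y - x) = - (2 * G * D * rr t.+1 i).
  rewrite er mulrC divfK ?lt0r_neq0 //.
  by rewrite !dotBr; ring.
have hcs := dot_sq_le g (y - x).
rewrite edot sqrrN in hcs.
have gl : enorm g <= G by exact: g_le wp tT.
have gn := enorm_ge0 g.
have hg2 : enorm g ^+ 2 <= G ^+ 2 by rewrite ler_sqr // ?nnegrE ltW.
have en0 : 0 <= enorm (y - x) ^+ 2 by apply: sqr_ge0.
have h4 : 4 * D ^+ 2 * rr t.+1 i ^+ 2 <= enorm (y - x) ^+ 2.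
  have : G ^+ 2 * (4 * D ^+ 2 * rr t.+1 i ^+ 2) <= G ^+ 2 * enorm (y - x) ^+ 2.
    have c2 : enorm g ^+ 2 * enorm (y - x) ^+ 2 <= G ^+ 2 * enorm (y - x) ^+ 2.
      by apply: ler_wpM2r.
    have c1 : G ^+ 2 * (4 * D ^+ 2 * rr t.+1 i ^+ 2) = (2 * G * D * rr t.+1 i) ^+ 2 by ring.
    rewrite c1; exact: le_trans hcs c2.
  by rewrite ler_pM2l // exprn_gt0.
rewrite edot.
move=> h.
have : lam / 2 * (4 * D ^+ 2 * rr t.+1 i ^+ 2) <= lam / 2 * enorm (y - x) ^+ 2.
  by apply: ler_wpM2l => //; apply: divr_ge0 => //; apply: ltW.
have -> : lam / 2 * (4 * D ^+ 2 * rr t.+1 i ^+ 2) = 2 * lam * D ^+ 2 * rr t.+1 i ^+ 2 by field.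
lra.
Qed.

Lemma meta_bound i : (i < K)%N ->
  \sum_(s < T) (fs s.+1 (xt s.+1) - fs s.+1 (expert_out es fs i s.+1)) <=
    2 * G * D * \sum_(s < T) rr s.+1 i - 2 * lam * D ^+ 2 * SS T i.
Proof.
move=> iK; rewrite SS_sum !mulr_sumr -sumrB; apply: ler_sum => s _.
exact: round_bound.
Qed.

Lemma regret_decomp i :
  regret X T fs (usc G D xbar es fs) =
  \sum_(s < T) (fs s.+1 (xt s.+1) - fs s.+1 (expert_out es fs i s.+1)) +
  regret X T fs (fun t => expert_out es fs i t).
Proof.
rewrite /regret !big_add1 /= !big_mkord sumrB.
under eq_bigr do rewrite usc_xt.
ring.
Qed.

Lemma meta_final i : (i < K)%N ->
  \sum_(s < T) (fs s.+1 (xt s.+1) - fs s.+1 (expert_out es fs i s.+1)) <=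
   2 * G * D * (2 * ln (1 + K%:R * ln (1 + T%:R)) + 2 * ln (K%:R : R)) +
   G ^+ 2 * (ln (1 + K%:R * ln (1 + T%:R)) / Num.sqrt (ln (K%:R : R)) +
      6 * Num.sqrt (ln (K%:R : R))) ^+ 2 / (2 * lam) + 2 * lam * D ^+ 2.
Proof.
move=> iK; set B := ln (1 + K%:R * ln (1 + T%:R)); set k := ln (K%:R : R).
have hm := meta_bound iK.
have ha := usc_amlp iK; rewrite -/B -/k in ha.
set a := B / Num.sqrt k + 6 * Num.sqrt k in ha *.
set u := Num.sqrt (1 + SS T i) in ha.
have u2 : u ^+ 2 = 1 + SS T i by rewrite sqr_sqrtr // addr_ge0 // SS_ge0.
have GD : 0 < 2 * G * D by rewrite -mulrA; apply: mulr_gt0 => //; apply: mulr_gt0.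
have h1 : 2 * G * D * \sum_(s < T) rr s.+1 i <= 2 * G * D * (2 * B + 2 * k + u * a).
  by apply: ler_wpM2l => //; exact: ltW.
have hsq : 0 <= (2 * lam * D * u - G * a) ^+ 2 by apply: sqr_ge0.
have h2 : 2 * G * D * (u * a) <= 2 * lam * D ^+ 2 * u ^+ 2 + G ^+ 2 * a ^+ 2 / (2 * lam).
  have l2 : 0 < 2 * lam by apply: mulr_gt0.
  rewrite -(ler_pM2l l2).
  have -> : 2 * lam * (2 * lam * D ^+ 2 * u ^+ 2 + G ^+ 2 * a ^+ 2 / (2 * lam)) =
     (2 * lam * D * u) ^+ 2 + G ^+ 2 * a ^+ 2 by field; exact: lt0r_neq0.
  have : 0 <= (2 * lam * D * u - G * a) ^+ 2 by exact: sqr_ge0.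
  have -> : (2 * lam * D * u - G * a) ^+ 2 =
     (2 * lam * D * u) ^+ 2 + G ^+ 2 * a ^+ 2 - 2 * lam * (2 * G * D * (u * a)) by ring.
  lra.
rewrite u2 in h2.
have : 2 * lam * D ^+ 2 * (1 + SS T i) = 2 * lam * D ^+ 2 + 2 * lam * D ^+ 2 * SS T i by ring.
have : 2 * G * D * (2 * B + 2 * k + u * a) = 2 * G * D * (2 * B + 2 * k) + 2 * G * D * (u * a) by ring.
lra.
Qed.

End USCproof.

End P5M.
Import P5M.

Module P6M.
Import Pilot.Defs.
Set Implicit Arguments. Unset Strict Implicit.
Local Open Scope ring_scope.

Section Num.
Variable R : realType.

Lemma e_le3 : expR (1 : R) <= 3.
Proof.
have h1 := @expR_ge1Dx R (- 6^-1).
have h2 := @expRxMexpNx_1 R (6^-1).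
have hp := @expR_gt0 R (6^-1).
have h10 : expR (6^-1) <= 6 / 5 :> R.
  move: h1 h2 hp; set a := expR (6^-1); set b := expR (- 6^-1) => h1 h2 hp.
  have h3 : 0 <= a * (b - 5 / 6) by apply: mulr_ge0; [lra| move: h1; rewrite -/b; lra].
  have : a * (b - 5 / 6) = 1 - a * 5 / 6 by rewrite mulrBr h2; field.
  lra.
have e1 : expR (1 : R) = expR (6^-1) ^+ 6 by rewrite -expRM_natr mulVf.
rewrite e1.
have hh : expR (6^-1 : R) ^+ 6 <= (6 / 5) ^+ 6.
  by apply: lerXn2r => //; rewrite nnegrE ?ltW.
apply: le_trans hh _.
have -> : (6 / 5 : R) ^+ 6 = (216 / 125) * (216 / 125) by rewrite !exprS expr0; field.
lra.
Qed.

Lemma ln3_ge1 : 1 <= ln (3 : R).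
Proof.
have := e_le3; rewrite -(ler_ln (expR_gt0 _)) ?posrE // expRK; exact.
Qed.

Lemma lnT_ge1 (T : nat) : (3 <= T)%N -> 1 <= ln (T%:R : R).
Proof.
move=> T3; apply: le_trans ln3_ge1 _.
by rewrite ler_ln ?posrE ?ltr0n // ?ler_nat //; apply: leq_trans T3.
Qed.

Lemma ln2_le1 : ln (2 : R) <= 1.
Proof. have := @ln_le_sub1 R 2 (ltr0n _ 2); lra. Qed.

End Num.

End P6M.
Import P6M.

Module P7M.
Import Pilot.Defs.
Set Implicit Arguments. Unset Strict Implicit.

Section Lists.
Variable A : Type.

Lemma In_cat (x : A) (s1 s2 : seq A) :
  List.In x (s1 ++ s2) <-> List.In x s1 \/ List.In x s2.
Proof.
elim: s1 => [|y s IH] /=; first by split; [right|case].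
rewrite IH; tauto.
Qed.

Lemma In_nth (x0 : A) (s : seq A) i : (i < size s)%N -> List.In (nth x0 s i) s.
Proof.
elim: s i => [|y s IH] [|i] //=; [by left| move=> h; right; exact: IH].
Qed.

Lemma nth_of_In (x0 : A) (s : seq A) z : List.In z s ->
  exists i, (i < size s)%N /\ nth x0 s i = z.
Proof.
elim: s => [|y s IH] //= [->|h]; first by exists 0%N.
by have [i [h1 h2]] := IH h; exists i.+1.
Qed.

Lemma In_map (B : Type) (f : B -> A) (s : seq B) y :
  List.In y (map f s) <-> exists x, List.In x s /\ y = f x.
Proof.
elim: s => [|x s IH] /=; first by split => // [[x []]].
split.
  case=> [<-|h]; first by exists x; split; [left|].
  by have [z [h1 h2]] := (proj1 IH) h; exists z; split; [right|].
case=> z [[<-|h1] h2]; first by left.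
by right; apply/IH; exists z.
Qed.

Lemma In_allpairs (B C : Type) (f : B -> C -> A) (s : seq B) (t : seq C) z :
  List.In z [seq f x y | x <- s, y <- t] <->
  exists x y, List.In x s /\ List.In y t /\ z = f x y.
Proof.
elim: s => [|x s IH] /=; first by split => // [[x [y []]]].
rewrite In_cat In_map IH; split.
  case=> [[y [h1 h2]]|[x' [y [h1 [h2 h3]]]]].
    by exists x, y; split; [left|].
  by exists x', y; split; [right|].
case=> x' [y [[<-|h1] [h2 h3]]]; first by left; exists y.
by right; exists x', y.
Qed.

End Lists.

Lemma In_iota (k m n : nat) : (m <= k < m + n)%N -> List.In k (iota m n).
Proof.
elim: n m => [|n IH] m /=; first by rewrite addn0 => /andP[h1 h2]; move: (leq_ltn_trans h1 h2); rewrite ltnn.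
move=> /andP[h1 h2]; have [->|ne] := eqVneq m k; first by left.
right; apply: IH; rewrite addSnnS h2 andbT; rewrite ltn_neqAle ne h1 //.
Qed.

End P7M.
Import P7M.

Module P8M.
Import Pilot.Defs.
Set Implicit Arguments. Unset Strict Implicit.
Local Open Scope ring_scope.

Section Grid.
Variable R : realType.

Lemma grid_pos (T : nat) (l : R) : (0 < T)%N -> List.In l (grid R T) -> 0 < l.
Proof.
move=> T0; rewrite /grid In_map => -[k [_ ->]].
by apply: divr_gt0; rewrite ltr0n // expn_gt0.
Qed.

Lemma pow_bracket N (y : R) : 1 <= y -> y <= (2 ^ N)%:R ->
  exists k, (k <= N)%N /\ (2 ^ k)%:R <= y /\ y <= (2 ^ k.+1)%:R.
Proof.
elim: N => [|N IH] y1 yN.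
  by exists 0%N; split => //; split => //; apply: le_trans yN _; rewrite ler_nat.
have [h|h] := leP y (2 ^ N)%:R.
  by have [k [h1 h2]] := IH y1 h; exists k; split => //; apply: leqW.
by exists N; split => //; split => //; apply: ltW.
Qed.

Lemma find_grid (T : nat) (lam : R) : (0 < T)%N -> T%:R^-1 <= lam <= 1 ->
  exists l, List.In l (grid R T) /\ l <= lam /\ lam <= 2 * l.
Proof.
move=> T0 /andP[l1 l2].
have Tp : 0 < T%:R :> R by rewrite ltr0n.
have y1 : 1 <= lam * T%:R by rewrite -(@ler_pdivrMr _ T%:R lam 1 Tp) div1r.
have yN : lam * T%:R <= (2 ^ up_log 2 T)%:R.
  apply: le_trans (_ : T%:R <= _); first by rewrite -[X in _ <= X]mul1r ler_pM2r.
  by rewrite ler_nat; apply: up_logP.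
have [k [kN [h1 h2]]] := pow_bracket y1 yN.
exists ((2 ^ k)%:R / T%:R); split; last split.
- rewrite /grid In_map; exists k; split => //; by apply: In_iota; rewrite add0n ltnS kN.
- by rewrite ler_pdivrMr.
- by rewrite expnS natrM in h2; rewrite mulrA ler_pdivlMr.
Qed.

End Grid.

End P8M.
Import P8M.

Module P9M.
Import Pilot.Defs.
Set Implicit Arguments. Unset Strict Implicit.
Local Open Scope ring_scope.

Section Arith.
Variable R : realType.

Lemma final_arith (G D C1 lam kap B L P m : R) :
  0 < G -> 0 < D -> 0 < C1 -> 0 < lam -> lam <= 1 ->
  2^-1 <= kap -> 0 <= B -> B <= 6 * kap -> 0 <= L -> kap <= P + L -> 2^-1 <= P ->
  2^-1 <= m ->
  2 * G * D * (2 * B + 2 * kap) +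
   G ^+ 2 * (B / Num.sqrt kap + 6 * Num.sqrt kap) ^+ 2 / (2 * lam) + 2 * lam * D ^+ 2
  + C1 / (lam / 2) * m
  <= ((28 * G * D + 72 * G ^+ 2) * (2 * P) + 4 * D ^+ 2 + 2 * C1) / lam * (m + L).
Proof.
move=> hG hD hC hl hl1 hk hB0 hB hL hkP hP hm.
have h2 : 2 * 2^-1 = 1 :> R by field.
have k0 : 0 < kap by lra.
have sk : 0 < Num.sqrt kap by rewrite sqrtr_gt0.
have skk : Num.sqrt kap ^+ 2 = kap by rewrite sqr_sqrtr // ltW.
set a := B / Num.sqrt kap + 6 * Num.sqrt kap.
have ha : a ^+ 2 <= 144 * kap.
  have e1 : (B / Num.sqrt kap) ^+ 2 = B ^+ 2 / kap by rewrite expr_div_n skk.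
  have e2 : (6 * Num.sqrt kap) ^+ 2 = 36 * kap by rewrite exprMn skk; ring.
  have : a ^+ 2 <= 2 * (B / Num.sqrt kap) ^+ 2 + 2 * (6 * Num.sqrt kap) ^+ 2.
    have h := sqr_ge0 (B / Num.sqrt kap - 6 * Num.sqrt kap).
    have : 2 * (B / Num.sqrt kap) ^+ 2 + 2 * (6 * Num.sqrt kap) ^+ 2 - a ^+ 2 =
       (B / Num.sqrt kap - 6 * Num.sqrt kap) ^+ 2 by rewrite /a; ring.
    lra.
  rewrite e1 e2.
  have : B ^+ 2 / kap <= 36 * kap.
    rewrite ler_pdivrMr //.
    have : B ^+ 2 <= (6 * kap) ^+ 2 by rewrite ler_sqr // ?nnegrE //; lra.
    have -> : (6 * kap) ^+ 2 = 36 * kap * kap by ring.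
    done.
  lra.
have lam_pos := hl.
rewrite -(ler_pM2l hl).
have eL : lam * (2 * G * D * (2 * B + 2 * kap) +
   G ^+ 2 * a ^+ 2 / (2 * lam) + 2 * lam * D ^+ 2 + C1 / (lam / 2) * m) =
   lam * (2 * G * D * (2 * B + 2 * kap)) + G ^+ 2 * a ^+ 2 / 2 + 2 * lam ^+ 2 * D ^+ 2 + 2 * C1 * m.
  field; exact: lt0r_neq0.
rewrite eL.
have eR : lam * (((28 * G * D + 72 * G ^+ 2) * (2 * P) + 4 * D ^+ 2 + 2 * C1) / lam * (m + L)) =
   ((28 * G * D + 72 * G ^+ 2) * (2 * P) + 4 * D ^+ 2 + 2 * C1) * (m + L).
  field; exact: lt0r_neq0.
rewrite eR.
have GD : 0 < G * D by apply: mulr_gt0.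
have G2 : 0 < G ^+ 2 by apply: exprn_gt0.
have D2 : 0 < D ^+ 2 by apply: exprn_gt0.
have t1 : lam * (2 * G * D * (2 * B + 2 * kap)) <= 28 * (G * D) * kap.
  have : 2 * G * D * (2 * B + 2 * kap) <= 28 * (G * D) * kap.
    have : 2 * B + 2 * kap <= 14 * kap by lra.
    move=> h; have := ler_wpM2l (ltW GD) h; lra.
  move=> h; have p0 : 0 <= 2 * G * D * (2 * B + 2 * kap).
    apply: mulr_ge0; [rewrite -mulrA; apply: mulr_ge0; [lra|exact: ltW]| lra].
  nra.
have t2 : G ^+ 2 * a ^+ 2 / 2 <= 72 * G ^+ 2 * kap.
  have := ler_wpM2l (ltW G2) ha; lra.
have t3 : 2 * lam ^+ 2 * D ^+ 2 <= 2 * D ^+ 2.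
  have : lam ^+ 2 <= 1 by rewrite expr2; nra.
  nra.
have kb : kap <= 2 * P * (m + L) by nra.
have Q0 : 0 <= 28 * G * D + 72 * G ^+ 2 by apply: addr_ge0; [rewrite -mulrA; apply: mulr_ge0; [lra|exact: ltW]|apply: mulr_ge0; [lra|exact: ltW]].
have t4 : (28 * G * D + 72 * G ^+ 2) * kap <= (28 * G * D + 72 * G ^+ 2) * (2 * P * (m + L)).
  exact: ler_wpM2l.
have t5 : 2 * D ^+ 2 <= 4 * D ^+ 2 * (m + L) by nra.
have t6 : 2 * C1 * m <= 2 * C1 * (m + L) by nra.
have e5 : ((28 * G * D + 72 * G ^+ 2) * (2 * P) + 4 * D ^+ 2 + 2 * C1) * (m + L) =
  (28 * G * D + 72 * G ^+ 2) * (2 * P * (m + L)) + 4 * D ^+ 2 * (m + L) + 2 * C1 * (m + L) by ring.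
have e6 : (28 * G * D + 72 * G ^+ 2) * kap = 28 * (G * D) * kap + 72 * G ^+ 2 * kap by ring.
lra.
Qed.

End Arith.

End P9M.
Import P9M.

Unset Implicit Arguments.
Import numFieldNormedType.Exports.
Local Open Scope classical_set_scope.
Local Open Scope ring_scope.

Theorem corollary1 (R : realType) (G D H C1 : R) (n : nat) :
  0 < C1 ->
  exists C : R,
  forall (d : nat) (X : set 'rV[R]_d) (T : nat) (fs : nat -> 'rV[R]_d -> R)
    (lam : R) (Astr Aexp : seq (R -> alg R d)) (Acon : seq (alg R d))
    (A1 A2 : R -> alg R d) (xbar : 'rV[R]_d),
  0 < G -> 0 < D ->
  (3 <= T)%N ->
  domain_ok X D ->
  setting X G H T fs ->
  T%:R^-1 <= lam <= 1 ->
  (forall t, (1 <= t <= T)%N -> strongly_convex_on X lam (fs t)) ->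
  (* all experts are online algorithms: their outputs lie in X *)
  (forall A, List.In A Astr -> forall p, 0 < p -> forall h, X (A p h)) ->
  (forall A, List.In A Aexp -> forall p, 0 < p -> forall h, X (A p h)) ->
  (forall A, List.In A Acon -> forall h, X (A h)) ->
  X xbar ->
  size Astr + size Aexp + size Acon = n ->
  List.In A1 Astr -> List.In A2 Astr ->
  (* regret bounds R(A1, l') and R(A2, l') *)
  (forall l', 0 < l' -> forall gs : nat -> 'rV[R]_d -> R,
     setting X G H T gs ->
     (forall t, (1 <= t <= T)%N -> strongly_convex_on X l' (gs t)) ->
     regret X T gs (run (A1 l') gs) <= C1 / l' * ln (VT X T gs + 2)) ->
  (forall l', 0 < l' -> forall gs : nat -> 'rV[R]_d -> R,
     setting X G H T gs ->
     (forall t, (1 <= t <= T)%N -> strongly_convex_on X l' (gs t)) ->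
     regret X T gs (run (A2 l') gs) <= C1 / l' * ln (Lstar X T gs + 2)) ->
  regret X T fs (usc G D xbar (experts T Astr Aexp Acon) fs)
    <= C / lam * (Num.min (ln (Lstar X T fs + 2)) (ln (VT X T fs + 2))
                  + ln (ln T%:R)).
Proof.
move=> hC1.
exists ((28 * G * D + 72 * G ^+ 2) * (2 * (ln (n%:R : R) + 2)) + 4 * D ^+ 2 + 2 * C1).
move=> d X T fs lam Astr Aexp Acon A1 A2 xbar hG hD hT hdom hset hlam hsc
  hAs hAe hAc hxbar hn hA1 hA2 hR1 hR2.
set es := experts T Astr Aexp Acon.
set N := up_log 2 T.
have T0 : (0 < T)%N by apply: leq_trans hT.
have T1 : (1 < T)%N by apply: leq_trans hT.
have hsize : size es = (size Astr * N.+1 + (size Aexp * N.+1 + size Acon))%N.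
  by rewrite /es /experts !size_cat !size_allpairs /grid size_map size_iota.
have sA : (0 < size Astr)%N by move: hA1; case: (Astr).
have Kge : (N.+1 <= size es)%N by rewrite hsize; nia.
have Kle : (size es <= n * N.+1)%N by rewrite hsize -hn; nia.
have n1 : (1 <= n)%N by rewrite -hn; lia.
have N1 : (1 <= N)%N by rewrite /N up_log_gt0 T1.
have lam0 : 0 < lam.
  case/andP: hlam => h _; apply: lt_le_trans h; rewrite invr_gt0 ltr0n //.
have lam1 : lam <= 1 by case/andP: hlam.
have Tp : 0 < T%:R :> R by rewrite ltr0n.
have lnT1 : 1 <= ln (T%:R : R) := @lnT_ge1 R T hT.
set L := ln (ln (T%:R : R)).
have L0 : 0 <= L by apply: ln_ge0.
have Kp : 0 < (size es)%:R :> R by rewrite ltr0n; apply: leq_trans Kge.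
have l2 := @ln2_ge R. have l2' := @ln2_le1 R. have l2'' := l2.
have hK : 2^-1 <= ln ((size es)%:R : R).
  apply: le_trans l2'' _.
  have h2K : (2 <= size es)%N by apply: leq_trans Kge; rewrite ltnS.
  have h2 : (2 : R) <= (size es)%:R by have := (@ler_nat R 2 (size es)); rewrite h2K => ->.
  by rewrite ler_ln ?posrE.
have lnT_le : ln (T%:R : R) <= N%:R.
  have h : ln (T%:R : R) <= ln ((2 ^ N)%:R : R).
    by rewrite ler_ln ?posrE ?ltr0n ?expn_gt0 // ler_nat up_logP.
  rewrite natrX lnXn // -[ln 2 *+ N]mulr_natr in h.
  have N0 : 0 <= N%:R :> R by apply: ler0n.
  nra.
have LK : L <= ln ((size es)%:R : R).
  rewrite /L ler_ln ?posrE //; last lra.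
  apply: le_trans lnT_le _; rewrite ler_nat; exact: leq_trans (leqnSn N) Kge.
have N1T : (N.+1)%:R <= 4 * ln (T%:R : R) :> R.
  have h := up_log_gtn (isT : (1 < 2)%N) T1; rewrite -/N in h.
  have h' : ln ((2 ^ N.-1)%:R : R) < ln (T%:R : R).
    by rewrite ltr_ln ?posrE ?ltr0n ?expn_gt0 // ltr_nat.
  rewrite natrX lnXn // -[ln 2 *+ N.-1]mulr_natr in h'.
  have eN : N%:R = (N.-1)%:R + 1 :> R by rewrite natr1 prednK.
  have eN1 : (N.+1)%:R = N%:R + 1 :> R by rewrite -natr1.
  rewrite eN1.
  have N0 : 0 <= (N.-1)%:R :> R by apply: ler0n.
  rewrite eN; nra.
have lnTp : 0 < ln (T%:R : R) by lra.
have ln4 : ln (4 : R) <= 2.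
  have -> : (4 : R) = 2 * 2 by rewrite -natrM.
  rewrite lnM ?posrE //; lra.
have kapP : ln ((size es)%:R : R) <= ln (n%:R : R) + 2 + L.
  have hKn : (size es)%:R <= n%:R * (N.+1)%:R :> R by rewrite -natrM ler_nat.
  have np : 0 < n%:R :> R by rewrite ltr0n.
  have Np : 0 < (N.+1)%:R :> R by rewrite ltr0n.
  have h1 : ln ((size es)%:R : R) <= ln (n%:R : R) + ln ((N.+1)%:R : R).
    rewrite -lnM ?posrE // ler_ln ?posrE // mulr_gt0 //.
  have h2 : ln ((N.+1)%:R : R) <= ln (4 * ln (T%:R : R)).
    by rewrite ler_ln ?posrE // mulr_gt0.
  rewrite lnM ?posrE // in h2.
  rewrite /L; lra.
pose B : R := ln (1 + (size es)%:R * ln (1 + T%:R)).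
have lnT2 : ln (1 + T%:R : R) <= 2 * ln (T%:R : R).
  have h : 1 + T%:R <= T%:R ^+ 2 :> R.
    have T2 : 3 <= T%:R :> R by have := @ler_nat R 3 T; rewrite hT => ->.
    rewrite expr2; nra.
  have : ln (1 + T%:R : R) <= ln (T%:R ^+ 2) by rewrite ler_ln ?posrE ?exprn_gt0 //; lra.
  by rewrite lnXn // mulr2n => hh; lra.
have ln3 : ln (3 : R) <= 2.
  have := @ln_le_sub1 R 3 (ltr0n _ 3); lra.
have hB0 : 0 <= B.
  apply: ln_ge0; rewrite lerDl; apply: mulr_ge0; [exact: ltW|apply: ln_ge0; rewrite lerDl //].
have hB : B <= 6 * ln ((size es)%:R : R).
  have h1 : 1 + (size es)%:R * ln (1 + T%:R) <= (size es)%:R * (3 * ln (T%:R : R)).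
    have K1 : 1 <= (size es)%:R :> R by rewrite ler1n; apply: leq_trans Kge.
    have : 1 <= (size es)%:R * ln (T%:R : R) by nra.
    have : (size es)%:R * ln (1 + T%:R) <= (size es)%:R * (2 * ln (T%:R : R)).
      by apply: ler_wpM2l => //; exact: ltW.
    lra.
  have hpos : 0 < 1 + (size es)%:R * ln (1 + T%:R : R).
    apply: lt_le_trans (_ : 0 < 1) _ => //; rewrite lerDl; apply: mulr_ge0; [exact: ltW|].
    by apply: ln_ge0; rewrite lerDl.
  have h2 : B <= ln ((size es)%:R * (3 * ln (T%:R : R))).
    by rewrite /B ler_ln ?posrE // mulr_gt0 // mulr_gt0.
  rewrite lnM ?posrE ?mulr_gt0 // lnM ?posrE // in h2.
  move: h2; rewrite -/L => h2.
  have hh : 2 * 2^-1 = 1 :> R by field. lra.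
have hP : 2^-1 <= ln (n%:R : R) + 2.
  have : 0 <= ln (n%:R : R) by apply: ln_ge0; rewrite ler1n.
  have h : 2 * 2^-1 = 1 :> R by field.
  lra.
have [x0 Xx0] : exists x, X x by case: hdom.
have hLs : 0 <= Lstar X T fs.
  apply: lb_le_inf; first by exists (cumloss T fs x0); exists x0.
  move=> _ [x Xx <-]; rewrite /cumloss big_nat_cond; apply: sumr_ge0 => t /andP[ht _].
  by have [_ _ _ hnn _] := hset t ht; apply: hnn.
have hVT : 0 <= VT X T fs.
  rewrite /VT; apply: sumr_ge0 => t _.
  set E := [set _ | x in X].
  have [hs|hs] := pselect (has_sup E).
    have hE : E (enorm (grad (fs t) x0 - (if t == 1%N then 0 else grad (fs t.-1) x0)) ^+ 2).
      by exists x0.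
    have := sup_upper_bound hs hE.
    have := sqr_ge0 (enorm (grad (fs t) x0 - (if t == 1%N then 0 else grad (fs t.-1) x0))).
    lra.
  by rewrite sup_out.
have hm0 : forall z : R, 0 <= z -> 2^-1 <= ln (z + 2).
  move=> z z0; apply: le_trans l2 _; rewrite ler_ln ?posrE //; lra.
have hes : forall i t, (i < size es)%N -> X (expert_out es fs i t).
  move=> i t iK.
  have ha := @In_nth _ ((fun _ => 0) : alg R d) es i iK.
  rewrite /expert_out /run /=.
  move: ha; set a := nth _ es i => ha.
  rewrite /es /experts In_cat In_cat in ha.
  case: ha => [ha|[ha|ha]].
  - move/In_allpairs: ha => [A [l [hA [hl ->]]]]; exact: hAs A hA l (grid_pos T0 hl) _.
  - move/In_allpairs: ha => [A [l [hA [hl ->]]]]; exact: hAe A hA l (grid_pos T0 hl) _.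
  - exact: hAc a ha _.
set kap := ln ((size es)%:R : R).
have key : forall (A : R -> alg R d) (q : R), List.In A Astr -> 0 <= q ->
  (forall l', 0 < l' ->
     (forall t, (1 <= t <= T)%N -> strongly_convex_on X l' (fs t)) ->
     regret X T fs (run (A l') fs) <= C1 / l' * q) ->
  regret X T fs (usc G D xbar es fs) <=
   2 * G * D * (2 * B + 2 * kap) +
   G ^+ 2 * (B / Num.sqrt kap + 6 * Num.sqrt kap) ^+ 2 / (2 * lam) + 2 * lam * D ^+ 2
   + C1 / (lam / 2) * q.
  move=> A q hA q0 hRA.
  have [l' [hl' [l'1 l'2]]] := find_grid T0 hlam.
  have l'0 : 0 < l' := grid_pos T0 hl'.
  have hin : List.In (A l') es.
    rewrite /es /experts In_cat; left; apply/In_allpairs; exists A, l'; split => //.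
  have [i [iK hi]] := nth_of_In ((fun _ => 0) : alg R d) hin.
  rewrite (regret_decomp _ _ _ _ _ _ _ i).
  have -> : regret X T fs [eta expert_out es fs i] = regret X T fs (run (A l') fs).
    by congr regret; apply: funext => t; rewrite /expert_out /= hi.
  have h1 := meta_final hG hD hdom hset hes hxbar hK lam0 hsc iK.
  have hsc' : forall t, (1 <= t <= T)%N -> strongly_convex_on X l' (fs t).
    move=> t ht x y Xx Xy; have := hsc t ht x y Xx Xy.
    have : l' / 2 * enorm (y - x) ^+ 2 <= lam / 2 * enorm (y - x) ^+ 2.
      apply: ler_wpM2r; first exact: sqr_ge0.
      by rewrite ler_pM2r.
    lra.
  have h2 := hRA l' l'0 hsc'.
  have h3 : C1 / l' * q <= C1 / (lam / 2) * q.
    apply: ler_wpM2r => //; apply: ler_wpM2l; first exact: ltW.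
    rewrite lef_pV2 ?posrE //; last by apply: divr_gt0.
    have h : 2 * 2^-1 = 1 :> R by field.
    lra.
  rewrite -/kap -/B in h1.
  lra.
have hkP : kap <= (ln (n%:R : R) + 2) + L by rewrite /kap; lra.
have [hmin|hmin] := leP (ln (Lstar X T fs + 2)) (ln (VT X T fs + 2)).
- apply: le_trans (key A2 (ln (Lstar X T fs + 2)) hA2 _ _) _.
  + by apply: le_trans (hm0 _ hLs); rewrite invr_ge0.
  + by move=> l' l0 hs; apply: hR2.
  exact: final_arith hG hD hC1 lam0 lam1 hK hB0 hB L0 hkP hP (hm0 _ hLs).
- apply: le_trans (key A1 (ln (VT X T fs + 2)) hA1 _ _) _.
  + by apply: le_trans (hm0 _ hVT); rewrite invr_ge0.
  + by move=> l' l0 hs; apply: hR1.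
  exact: final_arith hG hD hC1 lam0 lam1 hK hB0 hB L0 hkP hP (hm0 _ hVT).
Qed.
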